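(* Let $p,q>0$, $x\ge0$, $0\le y\le1$. Then both $y_k=B_{p,k}(x,y)$ and $y_k=\bar B_{p,k}(x,y)$ satisfy the four-term recurrence $$d_3y_{q+3}+d_2y_{q+2}+d_1y_{q+1}+d_0y_q=0,$$ where $$d_0=-(p+q)(1-y)^2,\quad d_1=(1-y)\left((p+q)(1-y)+p+2q+2+\tfrac12xy\right),$$ $$d_2=-(1-y)\left(p+2q+2+\tfrac12xy\right)-q-2,\quad d_3=q+2 .$$
   Context: For $p,q>0$ and $0\le y\le 1$, $I_y(p,q)=\frac{1}{B(p,q)}\int_0^y t^{p-1}(1-t)^{q-1}\,dt$ is the regularized incomplete beta function, with $B(p,q)=\Gamma(p)\Gamma(q)/\Gamma(p+q)$. The cumulative noncentral beta distribution is $B_{p,q}(x,y)=e^{-x/2}\sum_{j=0}^\infty \frac{1}{j!}\left(\frac x2\right)^j I_y(p+j,q)$ for $x\ge0$, and its complement is $\bar B_{p,q}(x,y)=1-B_{p,q}(x,y)$. *)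

(* Defs.v *)
From Stdlib Require Import Reals Lra ClassicalEpsilon Factorial.
Open Scope R_scope.

Definition beta_integrand (p q t : R) : R :=
  Rpower t (p - 1) * Rpower (1 - t) (q - 1).

Definition improper_RInt (f : R -> R) (a b l : R) : Prop :=
  forall eps, 0 < eps -> exists delta, 0 < delta /\
    forall u v, a < u < a + delta -> b - delta < v < b -> u <= v ->
      exists pr : Riemann_integrable f u v, Rabs (RiemannInt pr - l) < eps.

Definition improper_RInt_val (f : R -> R) (a b : R) : R :=
  epsilon (inhabits 0) (fun l => improper_RInt f a b l).

Definition Beta (p q : R) : R := improper_RInt_val (beta_integrand p q) 0 1.

Definition incbeta (y p q : R) : R :=
  if Rle_dec y 0 then 0
  else improper_RInt_val (beta_integrand p q) 0 y / Beta p q.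

Definition series_val (a : nat -> R) : R :=
  epsilon (inhabits 0) (fun l => infinite_sum a l).

Definition ncbeta (p q x y : R) : R :=
  exp (- x / 2) *
  series_val (fun j => (x / 2) ^ j / INR (fact j) * incbeta y (p + INR j) q).

Definition ncbeta_bar (p q x y : R) : R := 1 - ncbeta p q x y.

(* Main.v *)
Require Import Defs.
From Stdlib Require Import Reals Lra Lia ClassicalEpsilon Factorial.
From Coquelicot Require Import Coquelicot.
Open Scope R_scope.

Definition gg (a b t : R) := Rpower t a * Rpower (1 - t) b.
Definition gp (a b t : R) := beta_integrand a b t * (a - (a + b) * t).

Lemma Rpower_pos x y : 0 < Rpower x y.
Proof. unfold Rpower; apply exp_pos. Qed.

Lemma f_pos a b t : 0 < beta_integrand a b t.
Proof. unfold beta_integrand; apply Rmult_lt_0_compat; apply Rpower_pos. Qed.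

Lemma gg_pos a b t : 0 < gg a b t.
Proof. unfold gg; apply Rmult_lt_0_compat; apply Rpower_pos. Qed.

Lemma Rpower_S x y : 0 < x -> Rpower x (y + 1) = Rpower x y * x.
Proof. intros; rewrite Rpower_plus, Rpower_1; auto. Qed.

Lemma f_shift_b a b t : 0 < t < 1 ->
  beta_integrand a (b + 1) t = (1 - t) * beta_integrand a b t.
Proof.
  intros; unfold beta_integrand.
  replace (b + 1 - 1) with ((b - 1) + 1) by ring.
  rewrite Rpower_S by lra. ring.
Qed.

Lemma f_shift_a a b t : 0 < t < 1 ->
  beta_integrand (a + 1) b t = t * beta_integrand a b t.
Proof.
  intros; unfold beta_integrand.
  replace (a + 1 - 1) with ((a - 1) + 1) by ring.
  rewrite Rpower_S by lra. ring.
Qed.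

Lemma gg_derive a b t : 0 < t < 1 -> is_derive (gg a b) t (gp a b t).
Proof.
  intros Ht. unfold gg, gp, beta_integrand, Rpower.
  auto_derive.
  - lra.
  - replace (1 + - t) with (1 - t) by ring.
    replace (a * ln t) with ((a - 1) * ln t + ln t) by ring.
    replace (b * ln (1 - t)) with ((b - 1) * ln (1 - t) + ln (1 - t)) by ring.
    rewrite !exp_plus, !exp_ln by lra.
    field. lra.
Qed.

Lemma f_cont a b t : 0 < t < 1 -> continuous (beta_integrand a b) t.
Proof.
  intros Ht. apply (@ex_derive_continuous R_AbsRing R_NormedModule). unfold beta_integrand, Rpower.
  auto_derive. lra.
Qed.

Lemma gp_cont a b t : 0 < t < 1 -> continuous (gp a b) t.
Proof.
  intros Ht. apply (@ex_derive_continuous R_AbsRing R_NormedModule). unfold gp, beta_integrand, Rpower.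
  auto_derive. lra.
Qed.

Lemma gg_cont a b t : 0 < t < 1 -> continuous (gg a b) t.
Proof.
  intros Ht. apply (@ex_derive_continuous R_AbsRing R_NormedModule). eexists; apply gg_derive; auto.
Qed.

Lemma f_exRInt a b u v : 0 < u -> u <= v -> v < 1 -> ex_RInt (beta_integrand a b) u v.
Proof.
  intros. apply (@ex_RInt_continuous R_CompleteNormedModule). intros z Hz.
  rewrite Rmin_left in Hz by lra; rewrite Rmax_right in Hz by lra.
  apply f_cont; lra.
Qed.

Lemma gp_exRInt a b u v : 0 < u -> u <= v -> v < 1 -> ex_RInt (gp a b) u v.
Proof.
  intros. apply (@ex_RInt_continuous R_CompleteNormedModule). intros z Hz.
  rewrite Rmin_left in Hz by lra; rewrite Rmax_right in Hz by lra.
  apply gp_cont; lra.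
Qed.

Lemma gp_RInt a b u v : 0 < u -> u <= v -> v < 1 -> RInt (gp a b) u v = gg a b v - gg a b u.
Proof.
  intros. apply is_RInt_unique.
  apply (is_RInt_derive (gg a b) (gp a b)).
  - intros z Hz. rewrite Rmin_left in Hz by lra; rewrite Rmax_right in Hz by lra.
    apply gg_derive; lra.
  - intros z Hz. rewrite Rmin_left in Hz by lra; rewrite Rmax_right in Hz by lra.
    apply gp_cont; lra.
Qed.

Lemma cont_eps f x : continuous f x ->
  forall eps, 0 < eps -> exists d, 0 < d /\ forall z, Rabs (z - x) < d -> Rabs (f z - f x) < eps.
Proof.
  intros Hc eps He.
  destruct (proj1 (filterlim_locally f (f x)) Hc (mkposreal eps He)) as [d Hd].
  exists d; split; [apply cond_pos|]. intros z Hz. apply (Hd z). exact Hz.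
Qed.

Definition imp (f : R -> R) (y L : R) : Prop :=
  forall eps, 0 < eps -> exists d, 0 < d /\ forall u v, 0 < u < d -> y - d < v < y -> u <= v ->
    ex_RInt f u v /\ Rabs (RInt f u v - L) < eps.

Lemma eps_zero z : (forall eps, 0 < eps -> Rabs z < eps) -> z = 0.
Proof.
  intros H. destruct (Req_dec z 0) as [|Hz]; auto.
  exfalso. specialize (H (Rabs z) (Rabs_pos_lt _ Hz)). lra.
Qed.

Lemma imp_improper f y L : imp f y L -> improper_RInt f 0 y L.
Proof.
  intros H eps He. destruct (H eps He) as [d [Hd H']]. exists d; split; auto.
  intros u v Hu Hv Huv. destruct (H' u v ltac:(lra) Hv Huv) as [Hex Hl].
  exists (ex_RInt_Reals_0 _ _ _ Hex). rewrite <- RInt_Reals. exact Hl.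
Qed.

Lemma improper_unique f y l1 l2 : 0 < y -> improper_RInt f 0 y l1 -> improper_RInt f 0 y l2 -> l1 = l2.
Proof.
  intros Hy H1 H2. apply Rminus_diag_uniq. apply eps_zero. intros eps He.
  destruct (H1 (eps/2) ltac:(lra)) as [d1 [Hd1 H1']].
  destruct (H2 (eps/2) ltac:(lra)) as [d2 [Hd2 H2']].
  set (d := Rmin (Rmin d1 d2) y).
  assert (Hdd : 0 < d /\ d <= d1 /\ d <= d2 /\ d <= y).
  { unfold d. repeat split.
    - repeat apply Rmin_glb_lt; lra.
    - eapply Rle_trans; [apply Rmin_l|apply Rmin_l].
    - eapply Rle_trans; [apply Rmin_l|apply Rmin_r].
    - apply Rmin_r. }
  destruct (H1' (d/2) (y - d/2) ltac:(lra) ltac:(lra) ltac:(lra)) as [pr1 Hp1].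
  destruct (H2' (d/2) (y - d/2) ltac:(lra) ltac:(lra) ltac:(lra)) as [pr2 Hp2].
  rewrite (RiemannInt_P5 pr2 pr1) in Hp2.
  replace (l1 - l2) with ((RiemannInt pr1 - l2) - (RiemannInt pr1 - l1)) by ring.
  eapply Rle_lt_trans; [apply Rabs_triang|]. rewrite Rabs_Ropp. lra.
Qed.

Lemma imp_unique f y l1 l2 : 0 < y -> imp f y l1 -> imp f y l2 -> l1 = l2.
Proof. intros Hy H1 H2; eapply improper_unique; [exact Hy|apply imp_improper; exact H1|apply imp_improper; exact H2]. Qed.

Lemma val_of_imp f y L : 0 < y -> imp f y L -> improper_RInt_val f 0 y = L.
Proof.
  intros Hy H. unfold improper_RInt_val.
  assert (Hex : exists l, improper_RInt f 0 y l) by (exists L; apply imp_improper; auto).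
  pose proof (epsilon_spec (inhabits 0) _ Hex) as Hs.
  eapply improper_unique; eauto. apply imp_improper; auto.
Qed.

Lemma imp_ext f g y L : (forall t, 0 < t < y -> f t = g t) -> imp f y L -> imp g y L.
Proof.
  intros He H eps Heps. destruct (H eps Heps) as [d [Hd H']]. exists d; split; auto.
  intros u v Hu Hv Huv. destruct (H' u v Hu Hv Huv) as [Hx Hl].
  assert (E : forall z, Rmin u v < z < Rmax u v -> f z = g z).
  { intros z Hz. rewrite Rmin_left in Hz by lra; rewrite Rmax_right in Hz by lra.
    apply He; lra. }
  split. - eapply ex_RInt_ext; eauto.
  - rewrite <- (RInt_ext _ _ _ _ E). auto.
Qed.

Lemma imp_lin f g y L1 L2 al be : imp f y L1 -> imp g y L2 ->
  imp (fun t => al * f t + be * g t) y (al * L1 + be * L2).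
Proof.
  intros H1 H2 eps He.
  set (e := eps / (2 * (Rabs al + Rabs be + 1))).
  assert (Hpos : 0 < 2 * (Rabs al + Rabs be + 1)) by (pose proof (Rabs_pos al); pose proof (Rabs_pos be); lra).
  assert (He0 : 0 < e) by (unfold e; apply Rdiv_lt_0_compat; lra).
  destruct (H1 e He0) as [d1 [Hd1 H1']].
  destruct (H2 e He0) as [d2 [Hd2 H2']].
  exists (Rmin d1 d2); split; [apply Rmin_glb_lt; lra|].
  intros u v Hu Hv Huv.
  pose proof (Rmin_l d1 d2); pose proof (Rmin_r d1 d2).
  destruct (H1' u v ltac:(lra) ltac:(lra) Huv) as [Hx1 Hl1].
  destruct (H2' u v ltac:(lra) ltac:(lra) Huv) as [Hx2 Hl2].
  assert (Hx1' := ex_RInt_scal _ _ _ al Hx1).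
  assert (Hx2' := ex_RInt_scal _ _ _ be Hx2).
  assert (Hx := ex_RInt_plus _ _ _ _ Hx1' Hx2').
  split. { exact Hx. }
  assert (HR : RInt (fun t => al * f t + be * g t) u v = al * RInt f u v + be * RInt g u v).
  { pose proof (RInt_plus _ _ _ _ Hx1' Hx2') as E. simpl in E.
    rewrite (RInt_scal _ _ _ _ Hx1), (RInt_scal _ _ _ _ Hx2) in E.
    exact E. }
  rewrite HR.
  replace (al * RInt f u v + be * RInt g u v - (al * L1 + be * L2)) with
    (al * (RInt f u v - L1) + be * (RInt g u v - L2)) by ring.
  eapply Rle_lt_trans; [apply Rabs_triang|]. rewrite !Rabs_mult.
  assert (Rabs al * Rabs (RInt f u v - L1) <= Rabs al * e) by
    (apply Rmult_le_compat_l; [apply Rabs_pos|lra]).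
  assert (Rabs be * Rabs (RInt g u v - L2) <= Rabs be * e) by
    (apply Rmult_le_compat_l; [apply Rabs_pos|lra]).
  assert (Hee : (Rabs al + Rabs be) * e < eps).
  { unfold e. apply (Rmult_lt_reg_r (2 * (Rabs al + Rabs be + 1))); auto.
    field_simplify; [|lra].
    pose proof (Rabs_pos al); pose proof (Rabs_pos be). nra. }
  nra.
Qed.

Definition lim0 (G : R -> R) L := forall eps, 0 < eps -> exists d, 0 < d /\
  forall u, 0 < u < d -> Rabs (G u - L) < eps.
Definition limy (H : R -> R) y L := forall eps, 0 < eps -> exists d, 0 < d /\
  forall v, y - d < v < y -> Rabs (H v - L) < eps.

Lemma imp_of_lims f y c L0 L1 : 0 < c < y ->
  (forall u v, 0 < u -> u <= v -> v < y -> ex_RInt f u v) ->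
  lim0 (fun u => RInt f u c) L0 -> limy (fun v => RInt f c v) y L1 -> imp f y (L0 + L1).
Proof.
  intros Hc Hex H0 H1 eps He.
  destruct (H0 (eps/2) ltac:(lra)) as [d0 [Hd0 H0']].
  destruct (H1 (eps/2) ltac:(lra)) as [d1 [Hd1 H1']].
  set (d := Rmin (Rmin d0 d1) (Rmin c (y - c))).
  assert (Hdd : 0 < d /\ d <= d0 /\ d <= d1 /\ d <= c /\ d <= y - c).
  { unfold d. repeat split.
    - repeat apply Rmin_glb_lt; lra.
    - eapply Rle_trans; [apply Rmin_l|apply Rmin_l].
    - eapply Rle_trans; [apply Rmin_l|apply Rmin_r].
    - eapply Rle_trans; [apply Rmin_r|apply Rmin_l].
    - eapply Rle_trans; [apply Rmin_r|apply Rmin_r]. }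
  exists d; split; [lra|]. intros u v Hu Hv Huv.
  split; [apply Hex; lra|].
  rewrite <- (RInt_Chasles f u c v) by (apply Hex; lra).
  simpl. specialize (H0' u ltac:(lra)). specialize (H1' v ltac:(lra)).
  replace (plus (RInt f u c) (RInt f c v) - (L0 + L1)) with
    ((RInt f u c - L0) + (RInt f c v - L1)) by (unfold plus; simpl; ring).
  eapply Rle_lt_trans; [apply Rabs_triang|]. lra.
Qed.

Lemma mono_lim0 G c M : 0 < c ->
  (forall u u', 0 < u <= u' -> u' <= c -> G u' <= G u) ->
  (forall u, 0 < u <= c -> G u <= M) -> exists L, lim0 G L.
Proof.
  intros Hc Hm Hb.
  set (E := fun z => exists u, 0 < u <= c /\ z = G u).
  assert (HB : bound E) by (exists M; intros z [u [Hu ->]]; auto).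
  assert (HE : exists z, E z) by (exists (G c); exists c; split; [lra|auto]).
  destruct (completeness E HB HE) as [m [Hub Hlub]].
  exists m. intros eps He.
  assert (Hx : exists u0, 0 < u0 <= c /\ m - eps < G u0).
  { apply Classical_Prop.NNPP; intros Hn.
    assert (m <= m - eps); [|lra].
    apply Hlub. intros z [u [Hu ->]].
    destruct (Rle_lt_dec (G u) (m - eps)); auto. exfalso; apply Hn; exists u; auto. }
  destruct Hx as [u0 [Hu0 Hg]]. exists u0; split; [lra|].
  intros u Hu. assert (G u <= m) by (apply Hub; exists u; split; [lra|auto]).
  assert (G u0 <= G u) by (apply Hm; lra).
  apply Rabs_def1; lra.
Qed.

Lemma mono_limy H y c M : c < y ->
  (forall v v', c <= v <= v' -> v' < y -> H v <= H v') ->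
  (forall v, c <= v < y -> H v <= M) -> exists L, limy H y L.
Proof.
  intros Hc Hm Hb.
  destruct (mono_lim0 (fun u => H (y - u)) (y - c) M) as [L HL].
  - lra.
  - intros u u' Hu Hu'. apply Hm; lra.
  - intros u Hu. apply Hb; lra.
  - exists L. intros eps He. destruct (HL eps He) as [d [Hd Hd']].
    exists d; split; auto. intros v Hv. specialize (Hd' (y - v) ltac:(lra)).
    replace (y - (y - v)) with v in Hd' by ring. auto.
Qed.

Lemma Rpower_1_base e : Rpower 1 e = 1.
Proof. unfold Rpower; rewrite ln_1, Rmult_0_r; apply exp_0. Qed.

Lemma small_prod c e eps : 0 < c -> 0 <= e -> 0 < eps ->
  exists d, 0 < d /\ forall w, 0 < w < d -> Rpower w c * Rpower (1 - w) e < eps.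
Proof.
  intros Hc He Heps. exists (Rmin 1 (Rpower eps (/ c))). split.
  { apply Rmin_glb_lt; [lra|apply Rpower_pos]. }
  intros w Hw. pose proof (Rmin_l 1 (Rpower eps (/ c))); pose proof (Rmin_r 1 (Rpower eps (/ c))).
  assert (H1 : Rpower w c < eps).
  { assert (E : Rpower (Rpower eps (/ c)) c = eps).
    { rewrite Rpower_mult. rewrite Rinv_l by lra. apply Rpower_1; auto. }
    apply Rlt_le_trans with (Rpower (Rpower eps (/ c)) c); [apply Rlt_Rpower_l; lra|rewrite E; lra]. }
  assert (H2 : Rpower (1 - w) e <= 1).
  { apply Rle_trans with (Rpower 1 e); [apply Rle_Rpower_l; lra|rewrite Rpower_1_base; lra]. }
  pose proof (Rpower_pos w c); pose proof (Rpower_pos (1 - w) e). nra.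
Qed.

Lemma gg_lim0 a b : 0 < a -> 0 < b -> lim0 (gg a b) 0.
Proof.
  intros Ha Hb eps He. destruct (small_prod a b eps Ha ltac:(lra) He) as [d [Hd H]].
  exists d; split; auto. intros u Hu. rewrite Rminus_0_r.
  pose proof (gg_pos a b u). rewrite Rabs_right by lra. unfold gg. apply H; auto.
Qed.

Lemma gg_lim1 a b : 0 < a -> 0 < b -> limy (gg a b) 1 0.
Proof.
  intros Ha Hb eps He. destruct (small_prod b a eps Hb ltac:(lra) He) as [d [Hd H]].
  exists d; split; auto. intros v Hv. rewrite Rminus_0_r.
  pose proof (gg_pos a b v). rewrite Rabs_right by lra. unfold gg.
  specialize (H (1 - v) ltac:(lra)). replace (1 - (1 - v)) with v in H by ring. lra.
Qed.

Definition bd (a b y : R) := if Rlt_dec y 1 then gg a b y else 0.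

Lemma gg_limy a b y : 0 < a -> 0 < b -> 0 < y <= 1 -> limy (gg a b) y (bd a b y).
Proof.
  intros Ha Hb Hy. unfold bd. destruct (Rlt_dec y 1) as [Hy1|Hy1].
  - intros eps He. destruct (cont_eps _ _ (gg_cont a b y ltac:(lra)) eps He) as [d [Hd H]].
    exists d; split; auto. intros v Hv. apply H. apply Rabs_def1; lra.
  - replace y with 1 by lra. apply gg_lim1; auto.
Qed.

Lemma gp_imp a b y : 0 < a -> 0 < b -> 0 < y <= 1 -> imp (gp a b) y (bd a b y).
Proof.
  intros Ha Hb Hy eps He.
  destruct (gg_lim0 a b Ha Hb (eps/2) ltac:(lra)) as [d0 [Hd0 H0]].
  destruct (gg_limy a b y Ha Hb Hy (eps/2) ltac:(lra)) as [d1 [Hd1 H1]].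
  exists (Rmin (Rmin d0 d1) y). split; [repeat apply Rmin_glb_lt; lra|].
  pose proof (Rmin_l (Rmin d0 d1) y); pose proof (Rmin_r (Rmin d0 d1) y).
  pose proof (Rmin_l d0 d1); pose proof (Rmin_r d0 d1).
  intros u v Hu Hv Huv. split; [apply gp_exRInt; lra|].
  rewrite gp_RInt by lra. specialize (H0 u ltac:(lra)). specialize (H1 v ltac:(lra)).
  rewrite Rminus_0_r in H0.
  replace (gg a b v - gg a b u - bd a b y) with ((gg a b v - bd a b y) - gg a b u) by ring.
  eapply Rle_lt_trans; [apply Rabs_triang|]. rewrite Rabs_Ropp. lra.
Qed.

Section F.
Variables a b : R.
Hypothesis Ha : 0 < a.
Hypothesis Hb : 0 < b.
Let f := beta_integrand a b.

Lemma f_chasles u w v : 0 < u -> u <= w -> w <= v -> v < 1 ->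
  RInt f u v = RInt f u w + RInt f w v.
Proof.
  intros. rewrite <- (RInt_Chasles f u w v); try (apply f_exRInt; lra). reflexivity.
Qed.

Lemma f_RInt_ge0 u v : 0 < u -> u <= v -> v < 1 -> 0 <= RInt f u v.
Proof.
  intros. apply RInt_ge_0; auto. apply f_exRInt; lra.
  intros; apply Rlt_le, f_pos.
Qed.

Lemma f_bound0 u m : 0 < u -> u <= m -> m <= a / (2 * (a + b)) -> m < 1 ->
  RInt f u m <= 2 / a * gg a b m.
Proof.
  intros Hu Hum Hm Hm1.
  assert (Hx : ex_RInt (fun t => 2 / a * gp a b t) u m).
  { apply (ex_RInt_scal (gp a b) u m (2 / a)). apply gp_exRInt; lra. }
  apply Rle_trans with (RInt (fun t => 2 / a * gp a b t) u m).
  - apply RInt_le; auto. apply f_exRInt; lra.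
    intros t Ht. unfold gp. fold f.
    assert (Ht0 : t <= a / (2 * (a + b))) by lra.
    assert (Hk : a / 2 <= a - (a + b) * t).
    { apply Rmult_le_compat_l with (r := a + b) in Ht0; [|lra].
      replace ((a + b) * (a / (2 * (a + b)))) with (a / 2) in Ht0 by (field; lra). lra. }
    pose proof (f_pos a b t). fold f in H.
    assert (2 / a * (f t * (a - (a + b) * t)) = f t * (2 / a * (a - (a + b) * t))) by ring.
    rewrite H0. assert (1 <= 2 / a * (a - (a + b) * t)).
    { apply Rmult_le_compat_l with (r := 2 / a) in Hk; [|apply Rlt_le, Rdiv_lt_0_compat; lra].
      replace (2 / a * (a / 2)) with 1 in Hk by (field; lra). lra. }
    nra.
  - assert (E := RInt_scal (gp a b) u m (2 / a) ltac:(apply gp_exRInt; lra)).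
    change (RInt (fun t => 2 / a * gp a b t) u m = 2 / a * RInt (gp a b) u m) in E.
    rewrite E.
    rewrite gp_RInt by lra. pose proof (gg_pos a b u).
    assert (0 < 2 / a) by (apply Rdiv_lt_0_compat; lra). nra.
Qed.

Lemma f_bound1 m v : 1 - b / (2 * (a + b)) <= m -> m <= v -> v < 1 ->
  RInt f m v <= 2 / b * gg a b m.
Proof.
  intros Hm Hmv Hv.
  assert (Hm0 : 0 < 1 - b / (2 * (a + b))).
  { assert (b / (2 * (a + b)) < 1); [|lra].
    apply (Rmult_lt_reg_r (2 * (a + b))); [lra|]. field_simplify; lra. }
  assert (Hx : ex_RInt (fun t => (- (2 / b)) * gp a b t) m v).
  { apply (ex_RInt_scal (gp a b) m v (- (2 / b))). apply gp_exRInt; lra. }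
  apply Rle_trans with (RInt (fun t => (- (2 / b)) * gp a b t) m v).
  - apply RInt_le; auto. apply f_exRInt; lra.
    intros t Ht. unfold gp. fold f.
    assert (Ht0 : 1 - b / (2 * (a + b)) <= t) by lra.
    assert (Hk : b / 2 <= (a + b) * t - a).
    { apply Rmult_le_compat_l with (r := a + b) in Ht0; [|lra].
      replace ((a + b) * (1 - b / (2 * (a + b)))) with (a + b / 2) in Ht0 by (field; lra). lra. }
    pose proof (f_pos a b t). fold f in H.
    assert (- (2 / b) * (f t * (a - (a + b) * t)) = f t * (2 / b * ((a + b) * t - a))) by ring.
    rewrite H0. assert (1 <= 2 / b * ((a + b) * t - a)).
    { apply Rmult_le_compat_l with (r := 2 / b) in Hk; [|apply Rlt_le, Rdiv_lt_0_compat; lra].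
      replace (2 / b * (b / 2)) with 1 in Hk by (field; lra). lra. }
    nra.
  - assert (E := RInt_scal (gp a b) m v (- (2 / b)) ltac:(apply gp_exRInt; lra)).
    change (RInt (fun t => - (2 / b) * gp a b t) m v = - (2 / b) * RInt (gp a b) m v) in E.
    rewrite E.
    rewrite gp_RInt by lra. pose proof (gg_pos a b v).
    assert (0 < 2 / b) by (apply Rdiv_lt_0_compat; lra). nra.
Qed.

Lemma f_imp_exists y : 0 < y <= 1 -> exists L, imp f y L.
Proof.
  intros Hy. set (c := y / 2).
  assert (Hc : 0 < c < y) by (unfold c; lra).
  assert (Hs0 : 0 < a / (2 * (a + b))) by (apply Rdiv_lt_0_compat; lra).
  destruct (mono_lim0 (fun u => RInt f u c) c
             (2 / a * gg a b (Rmin c (a / (2 * (a + b)))) + RInt f (Rmin c (a / (2 * (a + b)))) c))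
    as [L0 HL0].
  - lra.
  - intros u u' Hu Hu'. simpl. rewrite (f_chasles u u' c) by lra.
    pose proof (f_RInt_ge0 u u' ltac:(lra) ltac:(lra) ltac:(lra)). lra.
  - intros u Hu. set (m := Rmin c (a / (2 * (a + b)))).
    assert (0 < m) by (unfold m; apply Rmin_glb_lt; lra).
    pose proof (Rmin_l c (a / (2 * (a + b)))); pose proof (Rmin_r c (a / (2 * (a + b)))).
    fold m in H0, H1.
    pose proof (gg_pos a b m).
    assert (0 < 2 / a) by (apply Rdiv_lt_0_compat; lra).
    destruct (Rle_dec u m).
    + rewrite (f_chasles u m c) by lra.
      pose proof (f_bound0 u m ltac:(lra) ltac:(lra) ltac:(lra) ltac:(lra)). lra.
    + rewrite (f_chasles m u c) by lra.
      pose proof (f_RInt_ge0 m u ltac:(lra) ltac:(lra) ltac:(lra)). nra.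
  - assert (HH : exists L1, limy (fun v => RInt f c v) y L1).
    { destruct (Rlt_dec y 1) as [Hy1|Hy1].
      - apply (mono_limy _ y c (RInt f c y)); [lra| |].
        + intros v v' Hv Hv'. rewrite (f_chasles c v v') by lra.
          pose proof (f_RInt_ge0 v v' ltac:(lra) ltac:(lra) ltac:(lra)). lra.
        + intros v Hv. rewrite (f_chasles c v y) by lra.
          pose proof (f_RInt_ge0 v y ltac:(lra) ltac:(lra) ltac:(lra)). lra.
      - assert (y = 1) by lra. subst y.
        set (s1 := 1 - b / (2 * (a + b))).
        assert (Hs1 : s1 < 1).
        { unfold s1. assert (0 < b / (2 * (a + b))) by (apply Rdiv_lt_0_compat; lra). lra. }
        set (m := Rmax c s1).
        pose proof (Rmax_l c s1); pose proof (Rmax_r c s1). fold m in H, H0.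
        assert (m < 1) by (unfold m; apply Rmax_lub_lt; lra).
        apply (mono_limy _ 1 c (RInt f c m + 2 / b * gg a b m)); [lra| |].
        + intros v v' Hv Hv'. rewrite (f_chasles c v v') by lra.
          pose proof (f_RInt_ge0 v v' ltac:(lra) ltac:(lra) ltac:(lra)). lra.
        + intros v Hv. pose proof (gg_pos a b m).
          assert (0 < 2 / b) by (apply Rdiv_lt_0_compat; lra).
          destruct (Rle_dec v m).
          * rewrite (f_chasles c v m) by lra.
            pose proof (f_RInt_ge0 v m ltac:(lra) ltac:(lra) ltac:(lra)). nra.
          * rewrite (f_chasles c m v) by lra.
            pose proof (f_bound1 m v ltac:(unfold s1 in *; lra) ltac:(lra) ltac:(lra)). lra. }
    destruct HH as [L1 HL1].
    exists (L0 + L1). apply (imp_of_lims f y c); auto.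
    intros; apply f_exRInt; lra.
Qed.

End F.

Definition Jv a b y := improper_RInt_val (beta_integrand a b) 0 y.

Lemma J_imp a b y : 0 < a -> 0 < b -> 0 < y <= 1 -> imp (beta_integrand a b) y (Jv a b y).
Proof.
  intros Ha Hb Hy. destruct (f_imp_exists a b Ha Hb y Hy) as [L HL].
  unfold Jv. rewrite (val_of_imp _ _ L); auto; lra.
Qed.

Lemma P1 a b y : 0 < a -> 0 < b -> 0 < y <= 1 -> Jv a b y = Jv a (b + 1) y + Jv (a + 1) b y.
Proof.
  intros Ha Hb Hy.
  pose proof (imp_lin _ _ y _ _ 1 1 (J_imp a (b + 1) y Ha ltac:(lra) Hy) (J_imp (a + 1) b y ltac:(lra) Hb Hy)) as H.
  apply (imp_ext _ (beta_integrand a b)) in H.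
  - rewrite !Rmult_1_l in H. eapply imp_unique; [|apply J_imp; auto|exact H]; lra.
  - intros t Ht. rewrite f_shift_b, f_shift_a by lra. ring.
Qed.

Lemma P2 a b y : 0 < a -> 0 < b -> 0 < y <= 1 -> a * Jv a (b + 1) y - b * Jv (a + 1) b y = bd a b y.
Proof.
  intros Ha Hb Hy.
  pose proof (imp_lin _ _ y _ _ a (- b) (J_imp a (b + 1) y Ha ltac:(lra) Hy) (J_imp (a + 1) b y ltac:(lra) Hb Hy)) as H.
  apply (imp_ext _ (gp a b)) in H.
  - replace (a * Jv a (b + 1) y - b * Jv (a + 1) b y) with (a * Jv a (b + 1) y + - b * Jv (a + 1) b y) by ring.
    eapply imp_unique; [|exact H|apply gp_imp; auto]; lra.
  - intros t Ht. rewrite f_shift_b, f_shift_a by lra. unfold gp. ring.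
Qed.

Lemma J_ge_sub a b y c d : 0 < a -> 0 < b -> 0 < y <= 1 -> 0 < c -> c <= d -> d < y ->
  RInt (beta_integrand a b) c d <= Jv a b y.
Proof.
  intros Ha Hb Hy Hc Hcd Hd. pose proof (J_imp a b y Ha Hb Hy) as H.
  apply Rnot_lt_le. intros Hlt.
  destruct (H (RInt (beta_integrand a b) c d - Jv a b y) ltac:(lra)) as [dl [Hdl H']].
  set (u := Rmin (dl / 2) c). set (v := Rmax (y - dl / 2) d).
  pose proof (Rmin_l (dl/2) c); pose proof (Rmin_r (dl/2) c).
  pose proof (Rmax_l (y - dl/2) d); pose proof (Rmax_r (y - dl/2) d).
  fold u in H0, H1; fold v in H2, H3.
  assert (0 < u) by (unfold u; apply Rmin_glb_lt; lra).
  assert (v < y) by (unfold v; apply Rmax_lub_lt; lra).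
  destruct (H' u v ltac:(lra) ltac:(lra) ltac:(lra)) as [_ Hl].
  rewrite (f_chasles a b u c v), (f_chasles a b c d v) in Hl by lra.
  pose proof (f_RInt_ge0 a b u c ltac:(lra) ltac:(lra) ltac:(lra)).
  pose proof (f_RInt_ge0 a b d v ltac:(lra) ltac:(lra) ltac:(lra)).
  apply Rabs_def2 in Hl. lra.
Qed.

Lemma J_ge0 a b y : 0 < a -> 0 < b -> 0 < y <= 1 -> 0 <= Jv a b y.
Proof.
  intros. pose proof (J_ge_sub a b y (y/2) (y/2) H H0 H1 ltac:(lra) ltac:(lra) ltac:(lra)).
  rewrite RInt_point in H2. exact H2.
Qed.

Lemma Beta_J a b : Beta a b = Jv a b 1.
Proof. reflexivity. Qed.

Lemma Beta_pos a b : 0 < a -> 0 < b -> 0 < Beta a b.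
Proof.
  intros Ha Hb. rewrite Beta_J.
  eapply Rlt_le_trans; [|apply (J_ge_sub a b 1 (1/4) (3/4)); auto; lra].
  apply RInt_gt_0; [lra| |].
  - intros; apply f_pos.
  - intros; apply f_cont; lra.
Qed.

Lemma J_le_Beta a b y : 0 < a -> 0 < b -> 0 < y <= 1 -> Jv a b y <= Beta a b.
Proof.
  intros Ha Hb Hy. rewrite Beta_J.
  destruct (Req_dec y 1) as [->|Hy1]; [lra|].
  pose proof (J_imp a b y Ha Hb Hy) as H1. pose proof (J_imp a b 1 Ha Hb ltac:(lra)) as H2.
  apply Rnot_lt_le. intros Hlt.
  set (e := (Jv a b y - Jv a b 1) / 2).
  destruct (H1 e ltac:(unfold e; lra)) as [d1 [Hd1 H1']].
  destruct (H2 e ltac:(unfold e; lra)) as [d2 [Hd2 H2']].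
  set (d := Rmin (Rmin d1 d2) y).
  assert (Hdd : 0 < d /\ d <= d1 /\ d <= d2 /\ d <= y).
  { unfold d. repeat split.
    - repeat apply Rmin_glb_lt; lra.
    - eapply Rle_trans; [apply Rmin_l|apply Rmin_l].
    - eapply Rle_trans; [apply Rmin_l|apply Rmin_r].
    - apply Rmin_r. }
  set (v2 := Rmax (1 - d2 / 2) (y - d / 2)).
  pose proof (Rmax_l (1 - d2 / 2) (y - d / 2)); pose proof (Rmax_r (1 - d2 / 2) (y - d / 2)).
  fold v2 in H, H0.
  assert (v2 < 1) by (unfold v2; apply Rmax_lub_lt; lra).
  destruct (H1' (d/2) (y - d/2) ltac:(lra) ltac:(lra) ltac:(lra)) as [_ Hl1].
  destruct (H2' (d/2) v2 ltac:(lra) ltac:(lra) ltac:(lra)) as [_ Hl2].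
  rewrite (f_chasles a b (d/2) (y - d/2) v2) in Hl2 by lra.
  pose proof (f_RInt_ge0 a b (y - d/2) v2 ltac:(lra) ltac:(lra) ltac:(lra)).
  apply Rabs_def2 in Hl1. apply Rabs_def2 in Hl2. unfold e in *. lra.
Qed.

Lemma incbeta_J y a b : 0 < y -> incbeta y a b = Jv a b y / Beta a b.
Proof.
  intros Hy. unfold incbeta. destruct (Rle_dec y 0); [lra|reflexivity].
Qed.

Lemma incbeta_bounds y a b : 0 < a -> 0 < b -> 0 <= y <= 1 -> 0 <= incbeta y a b <= 1.
Proof.
  intros Ha Hb Hy. destruct (Req_dec y 0) as [->|Hy0].
  - unfold incbeta. destruct (Rle_dec 0 0); lra.
  - rewrite incbeta_J by lra. pose proof (Beta_pos a b Ha Hb).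
    pose proof (J_ge0 a b y Ha Hb ltac:(lra)). pose proof (J_le_Beta a b y Ha Hb ltac:(lra)).
    split.
    + apply Rdiv_le_0_compat; lra.
    + apply (Rmult_le_reg_r (Beta a b)); auto. field_simplify; lra.
Qed.

Lemma bd_1 a b : bd a b 1 = 0.
Proof. unfold bd. destruct (Rlt_dec 1 1); [lra|auto]. Qed.

Lemma alg1 a b J1 J2 : 0 < a -> 0 < b -> a * J1 - b * J2 = 0 -> J1 = b / (a + b) * (J1 + J2).
Proof. intros. assert (E : J2 = a * J1 / b).
  { apply (Rmult_eq_reg_l b); [|lra]. replace (b * (a * J1 / b)) with (a * J1) by (field; lra). lra. }
  rewrite E. field. lra. Qed.
Lemma alg2 a b J1 J2 : 0 < a -> 0 < b -> a * J1 - b * J2 = 0 -> J2 = a / (a + b) * (J1 + J2).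
Proof. intros. assert (E : J1 = b * J2 / a).
  { apply (Rmult_eq_reg_l a); [|lra]. replace (a * (b * J2 / a)) with (b * J2) by (field; lra). lra. }
  rewrite E. field. lra. Qed.

Lemma Beta_b a b : 0 < a -> 0 < b -> Beta a (b + 1) = b / (a + b) * Beta a b.
Proof.
  intros Ha Hb. rewrite !Beta_J.
  pose proof (P1 a b 1 Ha Hb ltac:(lra)). pose proof (P2 a b 1 Ha Hb ltac:(lra)).
  rewrite bd_1 in H0. rewrite H. apply alg1; auto.
Qed.

Lemma Beta_a a b : 0 < a -> 0 < b -> Beta (a + 1) b = a / (a + b) * Beta a b.
Proof.
  intros Ha Hb. rewrite !Beta_J.
  pose proof (P1 a b 1 Ha Hb ltac:(lra)). pose proof (P2 a b 1 Ha Hb ltac:(lra)).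
  rewrite bd_1 in H0. rewrite H. apply alg2; auto.
Qed.

Lemma inc_b y a b : 0 < a -> 0 < b -> 0 < y <= 1 ->
  incbeta y a (b + 1) - incbeta y a b = bd a b y / (b * Beta a b).
Proof.
  intros Ha Hb Hy. rewrite !incbeta_J by lra. rewrite Beta_b by auto.
  pose proof (P1 a b y Ha Hb Hy). pose proof (P2 a b y Ha Hb Hy).
  pose proof (Beta_pos a b Ha Hb).
  assert (E : Jv a (b + 1) y = (bd a b y + b * Jv a b y) / (a + b)).
  { apply (Rmult_eq_reg_l (a + b)); [|lra].
    replace ((a + b) * ((bd a b y + b * Jv a b y) / (a + b))) with (bd a b y + b * Jv a b y) by (field; lra).
    rewrite H, <- H0. ring. }
  rewrite E. field. repeat split; lra.
Qed.

Lemma bd_b a b y : 0 < y <= 1 -> bd a (b + 1) y = (1 - y) * bd a b y.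
Proof.
  intros Hy. unfold bd, gg. destruct (Rlt_dec y 1); [|ring].
  rewrite (Rpower_S (1 - y)) by lra. ring.
Qed.

Lemma bd_a a b y : 0 < y <= 1 -> bd (a + 1) b y = y * bd a b y.
Proof.
  intros Hy. unfold bd, gg. destruct (Rlt_dec y 1); [|ring].
  rewrite (Rpower_S y) by lra. ring.
Qed.

Lemma inc_step y a b : 0 < a -> 0 < b -> 0 < y <= 1 ->
  incbeta y a (b + 1) = incbeta y a b + bd a b y / (b * Beta a b).
Proof. intros. rewrite <- (inc_b y a b) by auto. ring. Qed.

Section S.
Variables p q x y : R.
Hypothesis Hp : 0 < p.
Hypothesis Hq : 0 < q.
Hypothesis Hx : 0 <= x.
Hypothesis Hy : 0 < y <= 1.

Definition PP j := (x / 2) ^ j / INR (fact j).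
Definition vv b j := (x / 2) ^ j / INR (fact j) * incbeta y (p + INR j) b.
Definition tt j := PP j * bd (p + INR j) q y / (q * Beta (p + INR j) q).
Definition UU j := tt j * INR j * (p + INR j - 1).

Let d0 := - (p + q) * (1 - y) ^ 2.
Let d1 := (1 - y) * ((p + q) * (1 - y) + p + 2 * q + 2 + x * y / 2).
Let d2 := - (1 - y) * (p + 2 * q + 2 + x * y / 2) - q - 2.
Let d3 := q + 2.

Lemma termwise j : d3 * vv (q + 3) j + d2 * vv (q + 2) j + d1 * vv (q + 1) j + d0 * vv q j
  = (1 - y) ^ 2 / (q + 1) * (UU j - UU (S j)).
Proof.
  pose proof (pos_INR j) as Hj.
  assert (Ha : 0 < p + INR j) by lra.
  unfold d0, d1, d2, d3, vv, UU, tt, PP.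
  replace (q + 3) with (q + 1 + 1 + 1) by ring.
  replace (q + 2) with (q + 1 + 1) by ring.
  rewrite !inc_step by lra.
  rewrite !bd_b by lra. rewrite !Beta_b by lra.
  rewrite S_INR. replace (p + (INR j + 1)) with (p + INR j + 1) by ring.
  rewrite bd_a by lra. rewrite Beta_a by lra.
  rewrite fact_simpl, mult_INR, S_INR. simpl pow.
  pose proof (INR_fact_neq_0 j). pose proof (Beta_pos (p + INR j) q Ha Hq).
  field. repeat split; lra.
Qed.

Lemma PP_ge0 j : 0 <= PP j.
Proof.
  unfold PP. apply Rdiv_le_0_compat; [apply pow_le; lra|].
  apply lt_0_INR, lt_O_fact.
Qed.

Lemma vv_bounds b j : 0 < b -> 0 <= vv b j <= PP j.
Proof.
  intros Hb. pose proof (pos_INR j).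
  pose proof (incbeta_bounds y (p + INR j) b ltac:(lra) Hb ltac:(lra)).
  pose proof (PP_ge0 j). unfold vv. fold (PP j). nra.
Qed.

Lemma PP_sum : {l | Un_cv (fun N => sum_f_R0 PP N) l}.
Proof.
  destruct (exist_exp (x / 2)) as [l Hl]. exists l.
  intros eps He. destruct (Hl eps He) as [N HN]. exists N. intros n Hn.
  rewrite (sum_eq _ (fun i => / INR (fact i) * (x / 2) ^ i)).
  - apply HN; auto.
  - intros i _. unfold PP, Rdiv. ring.
Qed.

Lemma vv_conv b : 0 < b -> {L | infinite_sum (vv b) L}.
Proof.
  intros Hb. destruct (Rseries_CV_comp (vv b) PP (fun n => vv_bounds b n Hb) PP_sum) as [L HL].
  exists L. exact HL.
Qed.

Lemma tt_eq j : tt j = vv (q + 1) j - vv q j.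
Proof.
  pose proof (pos_INR j). unfold tt, vv. rewrite inc_step by lra. fold (PP j). field.
  pose proof (Beta_pos (p + INR j) q ltac:(lra) Hq). lra.
Qed.

Lemma UU_S j : UU (S j) = x * y / 2 * tt j * (p + INR j + q).
Proof.
  pose proof (pos_INR j) as Hj. assert (Ha : 0 < p + INR j) by lra.
  unfold UU, tt, PP.
  rewrite S_INR. replace (p + (INR j + 1)) with (p + INR j + 1) by ring.
  rewrite bd_a by lra. rewrite Beta_a by lra.
  rewrite fact_simpl, mult_INR, S_INR. simpl pow.
  pose proof (INR_fact_neq_0 j). pose proof (Beta_pos (p + INR j) q Ha Hq).
  field. repeat split; lra.
Qed.

Lemma tele N : sum_f_R0 (fun j => (1 - y) ^ 2 / (q + 1) * (UU j - UU (S j))) N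
  = (1 - y) ^ 2 / (q + 1) * (UU 0 - UU (S N)).
Proof.
  induction N; [simpl; ring|]. rewrite tech5, IHN. ring.
Qed.

End S.

Lemma cv_const c : Un_cv (fun _ => c) c.
Proof. intros eps He. exists 0%nat. intros. unfold Rdist. rewrite Rminus_diag, Rabs_R0. lra. Qed.

Lemma cv_scal W l c : Un_cv W l -> Un_cv (fun n => c * W n) (c * l).
Proof. intros H. apply CV_mult; auto. apply cv_const. Qed.

Lemma cv_squeeze W Z : (forall n, Rabs (W n) <= Z n) -> Un_cv Z 0 -> Un_cv W 0.
Proof.
  intros Hb HZ eps He. destruct (HZ eps He) as [N HN]. exists N. intros n Hn.
  specialize (HN n Hn). unfold Rdist in *. rewrite Rminus_0_r in *.
  pose proof (Hb n). pose proof (Rabs_pos (W n)).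
  pose proof (Rle_abs (Z n)). lra.
Qed.

Lemma cv_pred W : Un_cv W 0 -> Un_cv (fun n => W (pred n)) 0.
Proof.
  intros H eps He. destruct (H eps He) as [N HN]. exists (S N). intros n Hn.
  apply HN. destruct n; simpl; lia.
Qed.

Lemma series_val_eq a L : infinite_sum a L -> series_val a = L.
Proof.
  intros H. unfold series_val.
  assert (Hex : exists l, infinite_sum a l) by (exists L; auto).
  pose proof (epsilon_spec (inhabits 0) _ Hex) as Hs.
  eapply uniqueness_sum; eauto.
Qed.

Lemma sum4 A B C D a b c d N :
  sum_f_R0 (fun j => a * A j + b * B j + c * C j + d * D j) N =
  a * sum_f_R0 A N + b * sum_f_R0 B N + c * sum_f_R0 C N + d * sum_f_R0 D N.
Proof. induction N; [simpl; ring|]. rewrite !tech5, IHN. ring. Qed.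

Lemma core p q x y : 0 < p -> 0 < q -> 0 <= x -> 0 < y <= 1 ->
  (q + 2) * ncbeta p (q + 3) x y
  + (- (1 - y) * (p + 2 * q + 2 + x * y / 2) - q - 2) * ncbeta p (q + 2) x y
  + ((1 - y) * ((p + q) * (1 - y) + p + 2 * q + 2 + x * y / 2)) * ncbeta p (q + 1) x y
  + (- (p + q) * (1 - y) ^ 2) * ncbeta p q x y = 0.
Proof.
  intros Hp Hq Hx Hy.
  destruct (vv_conv p x y Hp Hx Hy (q + 3) ltac:(lra)) as [L3 H3].
  destruct (vv_conv p x y Hp Hx Hy (q + 2) ltac:(lra)) as [L2 H2].
  destruct (vv_conv p x y Hp Hx Hy (q + 1) ltac:(lra)) as [L1 H1].
  destruct (vv_conv p x y Hp Hx Hy q ltac:(lra)) as [L0 H0].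
  unfold ncbeta.
  change (fun j => (x / 2) ^ j / INR (fact j) * incbeta y (p + INR j) (q + 3)) with (vv p x y (q + 3)).
  change (fun j => (x / 2) ^ j / INR (fact j) * incbeta y (p + INR j) (q + 2)) with (vv p x y (q + 2)).
  change (fun j => (x / 2) ^ j / INR (fact j) * incbeta y (p + INR j) (q + 1)) with (vv p x y (q + 1)).
  change (fun j => (x / 2) ^ j / INR (fact j) * incbeta y (p + INR j) q) with (vv p x y q).
  rewrite (series_val_eq _ _ H3), (series_val_eq _ _ H2), (series_val_eq _ _ H1), (series_val_eq _ _ H0).
  set (d0 := - (p + q) * (1 - y) ^ 2).
  set (d1 := (1 - y) * ((p + q) * (1 - y) + p + 2 * q + 2 + x * y / 2)).
  set (d2 := - (1 - y) * (p + 2 * q + 2 + x * y / 2) - q - 2).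
  set (d3 := q + 2).
  assert (Hlim : Un_cv (fun N => sum_f_R0 (fun j => d3 * vv p x y (q + 3) j + d2 * vv p x y (q + 2) j
      + d1 * vv p x y (q + 1) j + d0 * vv p x y q j) N) (d3 * L3 + d2 * L2 + d1 * L1 + d0 * L0)).
  { apply (Un_cv_ext (fun N => d3 * sum_f_R0 (vv p x y (q + 3)) N + d2 * sum_f_R0 (vv p x y (q + 2)) N
      + d1 * sum_f_R0 (vv p x y (q + 1)) N + d0 * sum_f_R0 (vv p x y q) N)).
    - intros N. rewrite sum4. reflexivity.
    - repeat apply CV_plus; apply cv_scal; assumption. }
  assert (Hlim2 : Un_cv (fun N => sum_f_R0 (fun j => d3 * vv p x y (q + 3) j + d2 * vv p x y (q + 2) j
      + d1 * vv p x y (q + 1) j + d0 * vv p x y q j) N) 0).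
  { apply (Un_cv_ext (fun N => - ((1 - y) ^ 2 / (q + 1)) * UU p q x y (S N))).
    - intros N. rewrite (sum_eq _ (fun j => (1 - y) ^ 2 / (q + 1) * (UU p q x y j - UU p q x y (S j)))).
      + rewrite tele. replace (UU p q x y 0) with 0 by (unfold UU; simpl; ring). ring.
      + intros i _. apply termwise; auto.
    - replace 0 with (- ((1 - y) ^ 2 / (q + 1)) * 0) by ring. apply cv_scal.
      apply (cv_squeeze _ (fun n => x / 2 * (p + q) * PP x n + x / 2 * (x / 2 * PP x (pred n)))).
      + intros n. rewrite UU_S by auto. rewrite tt_eq by auto.
        pose proof (vv_bounds p x y Hp Hx Hy (q + 1) n ltac:(lra)).
        pose proof (vv_bounds p x y Hp Hx Hy q n ltac:(lra)).
        assert (HP : INR n * PP x n <= x / 2 * PP x (pred n)).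
        { destruct n. simpl. pose proof (PP_ge0 x Hx 0). nra. right. unfold PP. rewrite fact_simpl, mult_INR. simpl pred. simpl pow.
          field. split; [apply INR_fact_neq_0|]. apply not_0_INR; lia. }
        pose proof (pos_INR n). pose proof (PP_ge0 x Hx n).
        assert (Habs : Rabs (vv p x y (q + 1) n - vv p x y q n) <= PP x n) by (apply Rabs_le; lra).
        rewrite Rabs_mult. rewrite (Rabs_right (p + INR n + q)) by (pose proof (pos_INR n); lra).
        rewrite Rabs_mult. rewrite (Rabs_right (x * y / 2)) by (apply Rle_ge; apply Rmult_le_pos; [apply Rmult_le_pos|]; lra).
        assert (Hxy : x * y / 2 <= x / 2) by nra.
        assert (0 <= x * y / 2) by nra.
        apply Rle_trans with (x / 2 * PP x n * (p + INR n + q)).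
        * apply Rmult_le_compat_r; [lra|]. apply Rmult_le_compat; auto; apply Rabs_pos.
        * nra.
      + replace 0 with (x / 2 * (p + q) * 0 + x / 2 * (x / 2 * 0)) by ring.
        apply CV_plus; apply cv_scal; [|apply cv_scal; apply cv_pred]; apply cv_speed_pow_fact. }
  transitivity (exp (- x / 2) * (d3 * L3 + d2 * L2 + d1 * L1 + d0 * L0)); [ring|].
  rewrite (UL_sequence _ _ _ Hlim Hlim2). ring.
Qed.

Lemma ncbeta_y0 p b x : ncbeta p b x 0 = 0.
Proof.
  unfold ncbeta. rewrite (series_val_eq _ 0); [ring|].
  intros eps He. exists 0%nat. intros n _.
  rewrite (sum_eq _ (fun _ => 0)).
  - rewrite sum_cte. unfold Rdist. rewrite Rmult_0_l, Rminus_0_r, Rabs_R0. lra.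
  - intros i _. unfold incbeta. destruct (Rle_dec 0 0); [ring|lra].
Qed.

Theorem mainTheorem8 (p q x y : R) :
  0 < p -> 0 < q -> 0 <= x -> 0 <= y <= 1 ->
  let d0 := - (p + q) * (1 - y) ^ 2 in
  let d1 := (1 - y) * ((p + q) * (1 - y) + p + 2 * q + 2 + x * y / 2) in
  let d2 := - (1 - y) * (p + 2 * q + 2 + x * y / 2) - q - 2 in
  let d3 := q + 2 in
  (d3 * ncbeta p (q + 3) x y + d2 * ncbeta p (q + 2) x y
     + d1 * ncbeta p (q + 1) x y + d0 * ncbeta p q x y = 0) /\
  (d3 * ncbeta_bar p (q + 3) x y + d2 * ncbeta_bar p (q + 2) x y
     + d1 * ncbeta_bar p (q + 1) x y + d0 * ncbeta_bar p q x y = 0).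
Proof.
  intros Hp Hq Hx Hy d0 d1 d2 d3.
  assert (H1 : d3 * ncbeta p (q + 3) x y + d2 * ncbeta p (q + 2) x y
     + d1 * ncbeta p (q + 1) x y + d0 * ncbeta p q x y = 0).
  { unfold d0, d1, d2, d3. destruct (Req_dec y 0) as [->|Hy0].
    - rewrite !ncbeta_y0. ring.
    - apply core; auto; lra. }
  split; auto.
  unfold ncbeta_bar.
  transitivity ((d3 + d2 + d1 + d0) - (d3 * ncbeta p (q + 3) x y + d2 * ncbeta p (q + 2) x y
     + d1 * ncbeta p (q + 1) x y + d0 * ncbeta p q x y)); [ring|].
  rewrite H1. unfold d0, d1, d2, d3. ring.
Qed.
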